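(* Fix $\gamma \geq 1$. Let $A(u,v) = (u,u+v)$, $\mathbf{1} = (1,1)$, $\mathbf{c} = (\gamma,1)$, and define $T:\mathbb{R}^2\to\mathbb{R}^2$ by $$T\mathbf{x} = \begin{cases} A\mathbf{x} + \mathbf{1}, & \langle \mathbf{c},\mathbf{x}\rangle \leq -1/2,\\ A\mathbf{x}, & |\langle \mathbf{c},\mathbf{x}\rangle| < 1/2,\\ A\mathbf{x} - \mathbf{1}, & \langle \mathbf{c},\mathbf{x}\rangle \geq 1/2.\end{cases}$$ Let $V:\mathbb{R}^2\to\mathbb{R}$ be the convex function $V(u,v) = u^2 + |2v - u|$, and let $R = R_1\cup R_2$ with $$R_1 = \{(u,v) : \gamma u + v \geq 0,\ 2v + u \leq 1,\ u \leq 1/2\},\qquad R_2 = \{(u,v) : \gamma u + v < 0,\ 2v + u \geq -1,\ u \geq -1/2\}.$$ If $\mathbf{x}\in\mathbb{R}^2$ satisfies $V(T\mathbf{x}) - V(\mathbf{x}) > 0$, then $\mathbf{x} \in R$. Moreover, $R \subseteq S$, where $S = S^+\cup S^-$ with $S^+ = \{(u,v) : -1/2 \leq \gamma u + v \leq 1/2 + \gamma,\ 0 \leq u < 1\}$ and $S^- = \{(u,v) : -(1/2+\gamma) \leq \gamma u + v \leq 1/2,\ -1 \leq u < 0\}$.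
   Context: $\langle\cdot,\cdot\rangle$ is the standard inner product on $\mathbb{R}^2$. *)

(* Defs.v *)
From Stdlib Require Import Reals Lra.
Open Scope R_scope.

Definition pt := (R * R)%type.

Definition inner (x y : pt) : R := fst x * fst y + snd x * snd y.

Definition Amap (x : pt) : pt := (fst x, fst x + snd x).

Definition one2 : pt := (1, 1).
Definition cvec (gamma : R) : pt := (gamma, 1).

Definition padd (x y : pt) : pt := (fst x + fst y, snd x + snd y).
Definition psub (x y : pt) : pt := (fst x - fst y, snd x - snd y).

Definition Tmap (gamma : R) (x : pt) : pt :=
  let s := inner (cvec gamma) x in
  if Rle_dec s (-(1/2)) then padd (Amap x) one2
  else if Rlt_dec (Rabs s) (1/2) then Amap x
  else psub (Amap x) one2.

Definition Vfun (x : pt) : R := fst x ^ 2 + Rabs (2 * snd x - fst x).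

Definition R1 (gamma : R) (x : pt) : Prop :=
  let (u, v) := x in gamma * u + v >= 0 /\ 2 * v + u <= 1 /\ u <= 1/2.
Definition R2 (gamma : R) (x : pt) : Prop :=
  let (u, v) := x in gamma * u + v < 0 /\ 2 * v + u >= -1 /\ u >= -(1/2).
Definition Rregion (gamma : R) (x : pt) : Prop := R1 gamma x \/ R2 gamma x.

Definition Splus (gamma : R) (x : pt) : Prop :=
  let (u, v) := x in
  -(1/2) <= gamma * u + v <= 1/2 + gamma /\ 0 <= u < 1.
Definition Sminus (gamma : R) (x : pt) : Prop :=
  let (u, v) := x in
  -(1/2 + gamma) <= gamma * u + v <= 1/2 /\ -1 <= u < 0.
Definition Sregion (gamma : R) (x : pt) : Prop := Splus gamma x \/ Sminus gamma x.

(* Main.v *)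
Require Import Defs.
From Stdlib Require Import Reals Lra Psatz.
Open Scope R_scope.

Theorem proposition5 (gamma : R) (hgamma : 1 <= gamma) :
  (forall x : pt, Vfun (Tmap gamma x) - Vfun x > 0 -> Rregion gamma x) /\
  (forall x : pt, Rregion gamma x -> Sregion gamma x).
Proof.
  split.
  - intros [u v] H.
    unfold Tmap, Vfun, inner, cvec, Amap, padd, psub, one2, Rregion, Defs.R1, R2 in *; simpl in *.
    destruct (Rle_dec (gamma * u + 1 * v) (-(1/2))) as [h1|h1]; simpl in H.
    + right.
      destruct (Rcase_abs (u + 1 + 2 * (u + v + 1) - (u + 1) )); 
      destruct (Rcase_abs (2 * (u + v + 1) - (u + 1))) as [a|a];
      [rewrite (Rabs_left _ a) in H | rewrite (Rabs_right _ a) in H| rewrite (Rabs_left _ a) in H | rewrite (Rabs_right _ a) in H];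
      destruct (Rcase_abs (2 * v - u)) as [b|b];
      try rewrite (Rabs_left _ b) in H; try rewrite (Rabs_right _ b) in H;
      repeat split; nra.
    + destruct (Rlt_dec (Rabs (gamma * u + 1 * v)) (1/2)) as [h2|h2]; simpl in H.
      * apply Rabs_def2 in h2. destruct h2 as [h2 h3].
        destruct (Rcase_abs (2 * (u + v) - u)) as [a|a];
        [rewrite (Rabs_left _ a) in H | rewrite (Rabs_right _ a) in H];
        destruct (Rcase_abs (2 * v - u)) as [b|b];
        try rewrite (Rabs_left _ b) in H; try rewrite (Rabs_right _ b) in H;
        (destruct (Rle_or_lt 0 u);
         [left; repeat split; nra | right; repeat split; nra]).
      * assert (h3 : gamma * u + 1 * v >= 1/2).
        { destruct (Rcase_abs (gamma * u + 1 * v)) as [c|c];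
          [rewrite (Rabs_left _ c) in h2 | rewrite (Rabs_right _ c) in h2]; lra. }
        left.
        destruct (Rcase_abs (2 * (u + v - 1) - (u - 1))) as [a|a];
        [rewrite (Rabs_left _ a) in H | rewrite (Rabs_right _ a) in H];
        destruct (Rcase_abs (2 * v - u)) as [b|b];
        try rewrite (Rabs_left _ b) in H; try rewrite (Rabs_right _ b) in H;
        repeat split; nra.
  - intros [u v] H. unfold Rregion, Defs.R1, R2, Sregion, Splus, Sminus in *.
    destruct H as [[h1 [h2 h3]]|[h1 [h2 h3]]];
    (destruct (Rle_or_lt 0 u); [left | right]); repeat split; nra.
Qed.
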